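(* Let $p$ be a prime and let $A$, $B$ be $p$-groups with $|A|=p^a$, $|B|=p^b$, $a,b\ge1$. Suppose the maximum order of an element of $A$ is $p^d$ and the maximum order of an element of $B$ is $p^e$. Then the maximum order of an element of $A\wr B$ is $p^{d+e}$, and for every integer $k$, $$r_{A\wr B,k}=\sum_{i=0}^{e}\left(r_{B,i}-r_{B,i+1}\right)r_{A,k-i}^{\,p^{b-e+i}}.$$
   Context: For a finite $p$-group $G$ with $|G|=p^g$ and maximum element order $p^{f}$, and for $k\in\mathbb{Z}$, define $r_{G,k}=\frac{1}{p^g}\cdot\#\{x\in G:\ \mathrm{order}(x)\le p^{f-k}\}$ (so $r_{G,k}=1$ for $k\le 0$ and $r_{G,k}=0$ for $k>f$). For groups $A,B$, let $K=\prod_{b\in B}A$, on which $B$ acts by $x\cdot(\alpha_b)_b=(\alpha_{x^{-1}b})_b$ for $x\in B$; the wreath product $A\wr B$ is the semidirect product $K\rtimes B$ for this action. *)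

(* Defs.v *)
From HB Require Import structures.
From mathcomp Require Import all_boot all_order all_algebra all_fingroup.
Set Implicit Arguments. Unset Strict Implicit. Unset Printing Implicit Defensive.
Import GRing.Theory Num.Theory.

(* Wreath product A wr B = K x| B with K = prod_{b in B} A and
   (x . alpha)_b = alpha_{x^-1 b};  (f, x) * (g, y) = (f * (x . g), x * y). *)
Section Wreath.
Variables aT bT : finGroupType.

Definition wreath_type := ({ffun bT -> aT} * bT)%type.
HB.instance Definition _ := Finite.on wreath_type.

Definition wr_act (x : bT) (g : {ffun bT -> aT}) : {ffun bT -> aT} :=
  [ffun b => g (x^-1 * b)%g].

Definition wr_mul (u v : wreath_type) : wreath_type :=
  ([ffun b => (u.1 b * wr_act u.2 v.1 b)%g], (u.2 * v.2)%g).
Definition wr_one : wreath_type := ([ffun _ => 1%g], 1%g).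
Definition wr_inv (u : wreath_type) : wreath_type :=
  ([ffun b => (u.1 (u.2 * b)%g)^-1%g], (u.2)^-1%g).

Lemma wr_mulgA : associative wr_mul.
Proof.
move=> [f x] [g y] [h z]; rewrite /wr_mul /wr_act /=; congr (_, _).
  apply/ffunP=> b; rewrite /= !(ffunE (fun _ => _)). rewrite (mulgA (f b)) invMg; congr (_ * h _)%g; exact: mulgA.
exact: mulgA.
Qed.

Lemma wr_mul1g : left_id wr_one wr_mul.
Proof.
move=> [f x]; rewrite /wr_mul /wr_act /=; congr (_, _).
  by apply/ffunP=> b; rewrite /= !(ffunE (fun _ => _)) invg1 !mul1g.
by rewrite mul1g.
Qed.

Lemma wr_mulVg : left_inverse wr_one wr_inv wr_mul.
Proof.
move=> [f x]; rewrite /wr_mul /wr_act /=; congr (_, _).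
  by apply/ffunP=> b; rewrite /= !(ffunE (fun _ => _)) invgK mulVg.
by rewrite mulVg.
Qed.

HB.instance Definition _ := Finite_isGroup.Build wreath_type
  wr_mulgA wr_mul1g wr_mulVg.

End Wreath.

Notation "A \wr B" := (wreath_type A B) (at level 40, left associativity).

Definition max_order (gT : finGroupType) : nat := \max_(x : gT) #[x]%g.

Definition r_ratio (p : nat) (gT : finGroupType) (k : int) : rat :=
  let f := logn p (max_order gT) in
  (#|[set x : gT | (#[x]%g%:R <= (p%:R : rat) ^ (f%:Z - k))%R]|%:R
     / #|gT|%:R)%R.

(* Main.v *)
Require Import Defs.
From HB Require Import structures.
From mathcomp Require Import all_boot all_order all_algebra all_fingroup.
From mathcomp Require Import all_solvable zify ring.
Set Implicit Arguments. Unset Strict Implicit. Unset Printing Implicit Defensive.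
Import GRing.Theory Num.Theory.

Section W.
Variables aT bT : finGroupType.
Local Notation W := (wreath_type aT bT).
Open Scope group_scope.

Definition Fpow (f : {ffun bT -> aT}) (x : bT) n b := \prod_(i < n) f ((x ^+ i)^-1 * b).

Lemma wr_mulE (u v : W) : u * v = wr_mul u v.
Proof. by []. Qed.

Lemma wr_oneE : (1 : W) = wr_one aT bT.
Proof. by []. Qed.

Lemma invXS (x : bT) i : (x ^+ i.+1)^-1 = (x ^+ i)^-1 * x^-1.
Proof. by rewrite expgS invMg. Qed.

Lemma wr_expE f x n : ((f, x) : W) ^+ n = ([ffun b => Fpow f x n b], x ^+ n).
Proof.
elim: n => [|n IH].
  rewrite !expg0 wr_oneE /wr_one; congr (_, _); apply/ffunP=> b.
  by rewrite !ffunE /Fpow big_ord0.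
rewrite expgS IH wr_mulE /wr_mul /= expgS; congr (_, _); apply/ffunP=> b.
rewrite !ffunE /wr_act /= /Fpow big_ord_recl /= expg0 invg1 mul1g; congr (_ * _).
by apply: eq_bigr => i _; rewrite invXS mulgA.
Qed.

Lemma wr_exp1 (g : {ffun bT -> aT}) q : ((g, 1) : W) ^+ q = ([ffun b => g b ^+ q], 1).
Proof.
elim: q => [|q IH].
  by rewrite !expg0 wr_oneE /wr_one; congr (_, _); apply/ffunP=> b; rewrite !ffunE expg0.
rewrite expgS IH wr_mulE /wr_mul /= mulg1; congr (_, _); apply/ffunP=> b.
by rewrite !ffunE /wr_act /= invg1 mul1g expgS.
Qed.

Lemma wr_expM f x q : ((f, x) : W) ^+ (#[x] * q) = ([ffun b => Fpow f x #[x] b ^+ q], 1).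
Proof.
by rewrite expgM wr_expE expg_order wr_exp1; congr (_, _); apply/ffunP=> b; rewrite !ffunE.
Qed.

Lemma wr_expM_eq1 f x q : (((f, x) : W) ^+ (#[x] * q) == 1) = [forall b, Fpow f x #[x] b ^+ q == 1].
Proof.
rewrite wr_expM wr_oneE /wr_one xpair_eqE eqxx andbT.
apply/eqP/forallP => [H b|H].
  by have := congr1 (fun g : {ffun bT -> aT} => g b) H; rewrite !ffunE => ->.
by apply/ffunP=> b; rewrite !ffunE; apply/eqP.
Qed.

Lemma wr_exp_ne1 f x N : x ^+ N != 1 -> ((f, x) : W) ^+ N != 1.
Proof.
by apply: contra; rewrite wr_expE wr_oneE /wr_one xpair_eqE => /andP[].
Qed.

Lemma Fpow_conj f x b : Fpow f x #[x] (x^-1 * b) = (Fpow f x #[x] b) ^ (f b).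
Proof.
rewrite /Fpow; case Ex: #[x] (order_gt0 x) => [//|m] _.
rewrite big_ord_recr big_ord_recl /= expg0 invg1 mul1g.
have -> : (x ^+ m)^-1 * (x^-1 * b) = b.
  by rewrite mulgA -invXS -Ex expg_order invg1 mul1g.
rewrite /conjg !mulgA mulVg mul1g; congr (_ * _).
by apply: eq_bigr => i _; rewrite invXS mulgA.
Qed.


Section Trans.
Variable x : bT.
Definition Tr := [set b : bT | repr (<[x]> :* b) == b].

Lemma reprT b : repr (<[x]> :* b) \in Tr.
Proof. by rewrite inE rcoset_repr. Qed.

Lemma Tr_uniq s t : s \in Tr -> t \in Tr -> s \in <[x]> :* t -> s = t.
Proof.
rewrite !inE => /eqP Hs /eqP Ht /rcoset_eqP E.
by rewrite -Hs -Ht E.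
Qed.

Lemma repr_dec b : exists i, b = (x ^+ i)^-1 * repr (<[x]> :* b).
Proof.
have := mem_repr_rcoset <[x]> b; rewrite mem_rcoset => /cycleP[i Hi].
exists i; rewrite -Hi invMg invgK -mulgA mulVg mulg1 //.
Qed.

Lemma Fpow_shift f q i b :
  (Fpow f x #[x] ((x ^+ i)^-1 * b) ^+ q == 1) = (Fpow f x #[x] b ^+ q == 1).
Proof.
elim: i => [|i IH]; first by rewrite expg0 invg1 mul1g.
by rewrite expgSr invMg -mulgA Fpow_conj -conjXg conjg_eq1.
Qed.

Lemma Fpow_forall f q :
  [forall b, Fpow f x #[x] b ^+ q == 1] = [forall t in Tr, Fpow f x #[x] t ^+ q == 1].
Proof.
apply/forallP/forallP => [H t|H b]; first by apply/implyP=> _.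
have [i ->] := repr_dec b; rewrite Fpow_shift.
by have /implyP := H (repr (<[x]> :* b)); apply; apply: reprT.
Qed.

Lemma notinT t i : t \in Tr -> i.+1 < #[x] -> (x ^+ i.+1)^-1 * t \notin Tr.
Proof.
move=> Ht Hi; apply/negP => Hs.
have Hst : (x ^+ i.+1)^-1 * t \in <[x]> :* t.
  by rewrite mem_rcoset -mulgA mulgV mulg1 groupV mem_cycle.
have := Tr_uniq Hs Ht Hst => /(congr1 (fun y => y * t^-1)).
rewrite -mulgA mulgV mulg1 => /eqP; rewrite invg_eq1 -order_dvdn => /dvdn_leq.
by move=> /(_ isT); rewrite leqNgt Hi.
Qed.

Definition Phi (f : {ffun bT -> aT}) : {ffun bT -> aT} :=
  [ffun b => if b \in Tr then Fpow f x #[x] b else f b].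

Lemma Fpow_split f t : Fpow f x #[x] t =
  f t * \prod_(i < #[x].-1) f ((x ^+ i.+1)^-1 * t).
Proof.
rewrite /Fpow; case Ex: #[x] (order_gt0 x) => [//|m] _.
by rewrite big_ord_recl /= expg0 invg1 mul1g.
Qed.

Lemma Phi_inj : injective Phi.
Proof.
move=> f g E.
have off b : b \notin Tr -> f b = g b.
  move=> Hb; have := congr1 (fun h : {ffun bT -> aT} => h b) E.
  by rewrite !ffunE (negbTE Hb).
apply/ffunP => b; case: (boolP (b \in Tr)) => Hb; last exact: off.
have := congr1 (fun h : {ffun bT -> aT} => h b) E; rewrite !ffunE Hb !Fpow_split.
have -> : \prod_(i < #[x].-1) f ((x ^+ i.+1)^-1 * b) =
          \prod_(i < #[x].-1) g ((x ^+ i.+1)^-1 * b).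
  apply: eq_bigr => i _; apply: off; apply: notinT => //.
  have := ltn_ord i; have := order_gt0 x; lia.
by move/mulIg.
Qed.

Lemma card_Tr : (#|Tr| * #[x])%N = #|bT|.
Proof.
have inj : {in Tr &, injective (rcoset <[x]>)}.
  move=> s t Hs Ht E; apply: Tr_uniq => //; apply/rcoset_eqP; rewrite -!rcosetE; exact E.
have imT : rcoset <[x]> @: Tr = rcosets <[x]> [set: bT].
  apply/setP => C; apply/imsetP/imsetP => [[t0 _ ->]|[b _ ->]].
    by exists t0.
  by exists (repr (<[x]> :* b)); [apply: reprT | rewrite /= !rcosetE rcoset_repr].
rewrite -(card_in_imset inj) imT mulnC -cardsT -(LagrangeI [set: bT] <[x]>).
by rewrite setTI.
Qed.

End Trans.

Lemma card_constr (I J : finType) (D : {set I}) (S : {set J}) :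
  #|[set g : {ffun I -> J} | [forall t in D, g t \in S]]| = (#|S| ^ #|D| * #|J| ^ #|~: D|)%N.
Proof.
pose F := fun i : I => (fun y : J => (i \notin D) || (y \in S)) : pred J.
have -> : [set g : {ffun I -> J} | [forall t in D, g t \in S]] = [set g | g \in family F].
  apply/setP => g; rewrite !inE; apply/forallP/familyP => H i.
    by rewrite /F /=; case: (boolP (i \in D)) => Hi //=; have /implyP := H i; apply.
  by apply/implyP => Hi; have := H i; rewrite /F /= Hi.
rewrite cardsE card_family foldrE big_map big_enum /=.
rewrite (bigID (mem D)) /=.
rewrite [X in (X * _)%N](eq_bigr (fun _ => #|S|)); last first.
  by move=> i Hi; apply: eq_card => y; rewrite /F /= Hi.
rewrite [X in (_ * X)%N](eq_bigr (fun _ => #|J|)); last first.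
  by move=> i Hi; apply: eq_card => y; rewrite /F /= Hi.
rewrite [X in (_ * X)%N](eq_bigl (mem (~: D))); last by move=> i; rewrite !inE.
by rewrite !prod_nat_const.
Qed.


Lemma count_fx x q : #|[set f | (((f, x) : W) ^+ (#[x] * q) == 1)%g]| =
  (#|[set a : aT | (a ^+ q == 1)%g]| ^ #|Tr x| * #|aT| ^ #|~: Tr x|)%N.
Proof.
rewrite -card_constr -[RHS](card_preimset _ (@Phi_inj x)).
apply: eq_card => f; rewrite !inE wr_expM_eq1 Fpow_forall.
apply/forallP/forallP => H t; have /implyP H' := H t; apply/implyP => Ht; have := H' Ht;
  by rewrite !ffunE Ht inE.
Qed.

End W.

Section P.
Variable p : nat.
Hypothesis pr : prime p.

Lemma p_gt1 : (1 < p)%N. Proof. exact: prime_gt1. Qed.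

Lemma pgroup_order (G : finGroupType) n : #|G| = (p ^ n)%N -> forall x : G, #[x]%g = (p ^ logn p #[x]%g)%N.
Proof.
move=> HG x; have := order_dvdG (in_setT x); rewrite cardsT HG.
by case/(dvdn_pfactor _ _ pr) => m _ ->; rewrite pfactorK.
Qed.

Lemma exp_eq1 (G : finGroupType) n : #|G| = (p ^ n)%N -> forall (x : G) c,
  (x ^+ (p ^ c) == 1)%g = (logn p #[x]%g <= c)%N.
Proof.
move=> HG x c; rewrite -order_dvdn {1}(pgroup_order HG x) dvdn_Pexp2l //; exact: p_gt1.
Qed.

Lemma max_attained (G : finGroupType) : exists x : G, #[x]%g = max_order G.
Proof.
exists [arg max_(i > (1%g : G)) #[i]%g]; rewrite /max_order (bigmax_eq_arg (1%g : G)) //.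
Qed.

Lemma logn_le_max (G : finGroupType) n d : #|G| = (p ^ n)%N -> max_order G = (p ^ d)%N ->
  forall x : G, (logn p #[x]%g <= d)%N.
Proof.
move=> HG Hm x; rewrite -(leq_exp2l _ _ p_gt1) -(pgroup_order HG) -Hm.
rewrite /max_order; exact: (@leq_bigmax_cond _ xpredT (fun y : G => #[y]%g) x).
Qed.

Lemma max_le_card (G : finGroupType) n d : #|G| = (p ^ n)%N -> max_order G = (p ^ d)%N ->
  (d <= n)%N.
Proof.
move=> HG Hm; rewrite -(leq_exp2l _ _ p_gt1) -Hm -HG.
apply/bigmax_leqP => x _; rewrite -cardsT; apply: dvdn_leq; first by rewrite cardsT HG expn_gt0 prime_gt0.
exact: order_dvdG (in_setT x).
Qed.

Lemma logn_max_order (G : finGroupType) d : max_order G = (p ^ d)%N -> logn p (max_order G) = d.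
Proof. by move=> ->; rewrite pfactorK. Qed.

End P.

Lemma card_pairset (I J : finType) (P : pred (I * J)) :
  #|[set u : I * J | P u]| = \sum_(j : J) #|[set i : I | P (i, j)]|.
Proof.
transitivity (\sum_(u : I * J) (if P u then 1 else 0))%N.
  by rewrite -sum1_card big_mkcond /=; apply: eq_bigr => u _; rewrite inE.
transitivity (\sum_(i : I) \sum_(j : J) (if P (i, j) then 1 else 0))%N.
  by rewrite pair_bigA; apply: eq_bigr => -[i j].
rewrite exchange_big /=; apply: eq_bigr => j _.
by rewrite -sum1_card [RHS]big_mkcond /=; apply: eq_bigr => i _; rewrite !inE.
Qed.

Lemma card_W (aT bT : finGroupType) (P : pred (wreath_type aT bT)) :
  #|[set u : wreath_type aT bT | P u]| = \sum_(x : bT) #|[set f : {ffun bT -> aT} | P (f, x)]|.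
Proof. exact: (card_pairset P). Qed.

Lemma card_Wt (aT bT : finGroupType) : #|{: wreath_type aT bT}| = (#|aT| ^ #|bT| * #|bT|)%N.
Proof. by rewrite -card_ffun -card_prod. Qed.

Section Main.
Variables (p : nat) (aT bT : finGroupType) (a b d e : nat).
Hypotheses (pr : prime p) (HA : #|aT| = (p ^ a)%N) (HB : #|bT| = (p ^ b)%N)
  (MA : max_order aT = (p ^ d)%N) (MB : max_order bT = (p ^ e)%N).
Local Notation W := (wreath_type aT bT).

Lemma HW : #|{: W}| = (p ^ (a * p ^ b + b))%N.
Proof. by rewrite card_Wt HA HB expnD expnM. Qed.

Lemma ordB (x : bT) : #[x]%g = (p ^ logn p #[x]%g)%N.
Proof. exact: (pgroup_order pr HB x). Qed.

Lemma jB_le (x : bT) : (logn p #[x]%g <= e)%N.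
Proof. exact: (logn_le_max pr HB MB x). Qed.

Lemma e_le_b : (e <= b)%N.
Proof. exact: (max_le_card pr HB MB). Qed.

Lemma card_Tr_p (x : bT) : #|Tr x| = (p ^ (b - logn p #[x]%g))%N.
Proof.
have H := card_Tr x; rewrite HB ordB in H.
have : (p ^ b = p ^ (b - logn p #[x]%g) * p ^ (logn p #[x]%g))%N.
  rewrite -expnD subnK //; apply: leq_trans (jB_le x) e_le_b.
rewrite -{1}H => /eqP; rewrite eqn_pmul2r ?expn_gt0 ?prime_gt0 // => /eqP //.
Qed.

Lemma card_nTr (x : bT) : #|~: Tr x| = (p ^ b - p ^ (b - logn p #[x]%g))%N.
Proof. by rewrite -HB -(cardsC (Tr x)) card_Tr_p addKn. Qed.

Lemma expW_char (f : {ffun bT -> aT}) x c :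
  ((((f, x) : W) ^+ (p ^ c)) == 1)%g =
  (logn p #[x]%g <= c)%N && [forall bb, (Fpow f x #[x] bb ^+ (p ^ (c - logn p #[x]%g)) == 1)%g].
Proof.
case: leqP => H /=.
  have -> : (p ^ c = #[x]%g * p ^ (c - logn p #[x]%g))%N by rewrite {1}ordB -expnD subnKC.
  exact: wr_expM_eq1.
by apply/negbTE/wr_exp_ne1; rewrite (exp_eq1 pr HB) -ltnNge.
Qed.

Definition cntA m := #|[set y : aT | (logn p #[y]%g <= m)%N]|.

Lemma count_W c : #|[set u : W | (logn p #[u]%g <= c)%N]| =
  (\sum_(x : bT) (if (logn p #[x]%g <= c)%N then
     cntA (c - logn p #[x]%g) ^ (p ^ (b - logn p #[x]%g)) * #|aT| ^ (p ^ b - p ^ (b - logn p #[x]%g))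
   else 0))%N.
Proof.
rewrite card_W; apply: eq_bigr => x _.
rewrite (eq_card (B := [set f | (((f, x) : W) ^+ (p ^ c) == 1)%g])); last first.
  by move=> f; rewrite !inE (exp_eq1 pr HW).
case: leqP => H.
  have -> : (p ^ c = #[x]%g * p ^ (c - logn p #[x]%g))%N by rewrite {1}ordB -expnD subnKC.
  rewrite count_fx card_Tr_p card_nTr; congr (_ ^ _ * _)%N.
  by apply: eq_card => y; rewrite !inE (exp_eq1 pr HA).
apply: eq_card0 => f; rewrite !inE; apply/negbTE/wr_exp_ne1.
by rewrite (exp_eq1 pr HB) -ltnNge.
Qed.


Lemma maxW : max_order W = (p ^ (d + e))%N.
Proof.
apply/eqP; rewrite eqn_leq; apply/andP; split.
  apply/bigmax_leqP => -[f x] _; apply: dvdn_leq; first by rewrite expn_gt0 prime_gt0.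
  rewrite order_dvdn expW_char; apply/andP; split.
    by have := jB_le x; lia.
  apply/forallP => bb; rewrite (exp_eq1 pr HA).
  have := logn_le_max pr HA MA (Fpow f x #[x]%g bb); have := jB_le x; lia.
have [x0 Hx0] := max_attained bT; have [a0 Ha0] := max_attained aT.
pose f0 : {ffun bT -> aT} := [ffun bb => if bb == 1%g then a0 else 1%g].
pose u0 : W := (f0, x0).
have jx0 : logn p #[x0]%g = e by rewrite Hx0 MB pfactorK.
have ja0 : logn p #[a0]%g = d by rewrite Ha0 MA pfactorK.
have F0 : Fpow f0 x0 #[x0]%g 1%g = a0.
  rewrite Fpow_split ffunE eqxx big1 ?mulg1 // => i _; rewrite ffunE mulg1.
  case: ifP => // /eqP; rewrite /= => /eqP; rewrite invg_eq1 -order_dvdn => /dvdn_leq.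
  by move=> /(_ isT); have := ltn_ord i; have := order_gt0 x0; lia.
have : (u0 ^+ (p ^ logn p #[u0]%g) == 1)%g by rewrite -(pgroup_order pr HW) expg_order.
rewrite expW_char => /andP[H1 /forallP /(_ 1%g)]; rewrite F0 (exp_eq1 pr HA) ja0 jx0 => H2.
apply: leq_trans (@leq_bigmax_cond _ xpredT (fun y : W => #[y]%g) u0 isT).
rewrite (pgroup_order pr HW u0) leq_exp2l; last exact: prime_gt1.
by move: H1 H2; rewrite jx0; lia.
Qed.

End Main.

Definition cz (p : nat) (G : finGroupType) (s : int) :=
  #|[set x : G | ((logn p #[x]%g)%:Z <= s)%R]|.

Lemma r_ratio_char p (G : finGroupType) n k : prime p -> #|G| = (p ^ n)%N ->
  r_ratio p G k = ((cz p G ((logn p (max_order G))%:Z - k))%:R / #|G|%:R)%R.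
Proof.
move=> pr HG; rewrite /r_ratio /cz; congr (_%:R / _)%R; apply: eq_card => x.
rewrite !inE {1}(pgroup_order pr HG x) natrX.
have -> : ((p%:R : rat) ^+ logn p #[x]%g)%R = ((p%:R : rat) ^ (logn p #[x]%g)%:Z)%R by [].
by rewrite ler_eXz2l // ltr1n prime_gt1.
Qed.

Lemma cz_neg p (G : finGroupType) s : (s < 0)%R -> cz p G s = 0%N.
Proof.
move=> Hs; apply: eq_card0 => x; rewrite !inE; apply/negbTE; rewrite -Order.TotalTheory.ltNge.
lia.
Qed.

Lemma cz_pos p (G : finGroupType) (m : nat) : cz p G m%:Z = #|[set x : G | (logn p #[x]%g <= m)%N]|.
Proof. by apply: eq_card => x; rewrite !inE lez_nat. Qed.

Section Main2.
Variables (p : nat) (aT bT : finGroupType) (a b d e : nat).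
Hypotheses (pr : prime p) (HA : #|aT| = (p ^ a)%N) (HB : #|bT| = (p ^ b)%N)
  (MA : max_order aT = (p ^ d)%N) (MB : max_order bT = (p ^ e)%N).
Local Notation W := (wreath_type aT bT).

Definition rho (s : int) : rat := ((cz p aT s)%:R / #|aT|%:R)%R.

Lemma rho_neg s : (s < 0)%R -> rho s = 0%R.
Proof. by move=> Hs; rewrite /rho cz_neg ?mul0r. Qed.

Lemma pw_gt0 n : (0 < p ^ n)%N.
Proof. by rewrite expn_gt0 prime_gt0. Qed.

Lemma ratW (t : int) :
  ((cz p W t)%:R / #|{: W}|%:R : rat)%R =
  ((\sum_(x : bT) rho (t - (logn p #[x]%g)%:Z) ^+ (p ^ (b - logn p #[x]%g))) / #|bT|%:R)%R.
Proof.
have Bn0 : (#|bT|%:R : rat) != 0%R by rewrite pnatr_eq0 -lt0n HB pw_gt0.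
have An0 : (#|aT|%:R : rat) != 0%R by rewrite pnatr_eq0 -lt0n HA pw_gt0.
case: t => c.
  rewrite cz_pos (count_W pr HA HB MB) card_Wt natr_sum mulr_suml [RHS]mulr_suml.
  apply: eq_bigr => x _.
  case: leqP => H.
    rewrite subzn // /rho cz_pos !natrM !natrX expr_div_n /cntA.
    have MP : (p ^ (b - logn p #[x]%g) <= p ^ b)%N.
      by rewrite leq_exp2l ?leq_subr // prime_gt1.
    set M := (p ^ (b - logn p #[x]%g))%N in MP *.
    set Aa := (#|aT|%:R : rat).
    have -> : (Aa ^+ #|bT| = Aa ^+ M * Aa ^+ (p ^ b - M))%R by rewrite -exprD HB subnKC.
    have AM : (Aa ^+ M != 0)%R by rewrite expf_neq0.
    have AM2 : (Aa ^+ (p ^ b - M) != 0)%R by rewrite expf_neq0.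
    by field; rewrite Bn0 AM AM2.
  rewrite -[(0%:R)%R]/(0%R) mul0r rho_neg ?expr0n ?mul0r //.
    by rewrite eqn0Ngt pw_gt0 mul0r.
  lia.
rewrite cz_neg // mul0r big1 ?mul0r // => x _.
rewrite rho_neg ?expr0n.
  by rewrite eqn0Ngt pw_gt0.
lia.
Qed.


Lemma card_eqj (m : nat) :
  ((#|[set x : bT | logn p #[x]%g == m]|)%:R : rat)%R =
  ((cz p bT m%:Z)%:R - (cz p bT (m%:Z - 1))%:R)%R.
Proof.
have -> : cz p bT m%:Z = (#|[set x : bT | logn p #[x]%g == m]| + cz p bT (m%:Z - 1))%N.
  rewrite /cz -(cardsID [set x : bT | ((logn p #[x]%g)%:Z <= m%:Z - 1)%R]) addnC.
  congr (_ + _)%N; apply: eq_card => x; rewrite !inE.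
    apply/idP/idP => [/andP[H1 H2]|H]; first lia.
    by apply/andP; split; lia.
  apply/idP/idP => [/andP[H1 H2]|H]; first lia.
  by apply/andP; split; lia.
by rewrite natrD addrK.
Qed.

Lemma group_sum (G : nat -> rat) :
  (\sum_(x : bT) G (logn p #[x]%g))%R =
  (\sum_(i < e.+1) ((cz p bT (e - i)%N%:Z)%:R - (cz p bT ((e - i)%N%:Z - 1))%:R) * G (e - i)%N)%R.
Proof.
transitivity (\sum_(x : bT) \sum_(i < e.+1) if logn p #[x]%g == (e - i)%N then G (e - i)%N else 0)%R.
  apply: eq_bigr => x _; rewrite -big_mkcond /=.
  have jx := jB_le pr HB MB x.
  rewrite (big_pred1 (inord (e - logn p #[x]%g))) /=.
    by rewrite inordK ?subKn // ltnS leq_subr.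
  move=> i; rewrite /= -val_eqE /= inordK ?ltnS ?leq_subr //.
  move=> /=; have Hi := ltn_ord i; apply/eqP/eqP => H; lia.
rewrite (@exchange_big _ 0%R +%R) /=; apply: eq_bigr => i _.
rewrite -big_mkcond /= sumr_const -card_eqj mulr_natl.
by congr (_ *+ _)%R; apply: eq_card => x; rewrite !inE.
Qed.

End Main2.

Theorem theorem5 (p : nat) (A B : finGroupType) (a b d e : nat) :
  prime p ->
  #|A| = (p ^ a)%N -> #|B| = (p ^ b)%N -> (1 <= a)%N -> (1 <= b)%N ->
  max_order A = (p ^ d)%N -> max_order B = (p ^ e)%N ->
  max_order (A \wr B) = (p ^ (d + e))%N /\
  forall k : int,
    r_ratio p (A \wr B) k =
    (\sum_(i < e.+1)
       (r_ratio p B (i%:Z) - r_ratio p B ((i.+1)%:Z)) *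
       (r_ratio p A (k - i%:Z)) ^+ (p ^ (b - e + i))%N)%R.
Proof.
move=> pr HA HB _ _ MA MB.
have MW := maxW pr HA HB MA MB.
split => // k.
rewrite (r_ratio_char k pr (HW HA HB)) MW pfactorK //.
rewrite (ratW pr HA HB MA MB).
rewrite (group_sum pr HA HB MA MB (fun j => rho p A ((d + e)%N%:Z - k - j%:Z) ^+ (p ^ (b - j)))%R).
rewrite mulr_suml; apply: eq_bigr => i _.
rewrite (r_ratio_char _ pr HB) (r_ratio_char _ pr HB) (r_ratio_char _ pr HA) MA MB !pfactorK //.
have Hi : (i <= e)%N by rewrite -ltnS ltn_ord.
have Heb := e_le_b pr HB MB.
have E1 : (e%:Z - i%:Z = (e - i)%N%:Z)%R by rewrite subzn.
have E2 : (e%:Z - (i.+1)%:Z = (e - i)%N%:Z - 1)%R by lia.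
have E3 : ((d + e)%N%:Z - k - (e - i)%N%:Z = d%:Z - (k - i%:Z))%R by lia.
have E4 : (b - (e - i) = b - e + i)%N by lia.
rewrite E1 E2 E3 E4 /rho.
have Bn0 : (#|B|%:R : rat) != 0%R by rewrite pnatr_eq0 -lt0n HB expn_gt0 prime_gt0.
by field.
Qed.
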